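(* In the risk-aversion-shock setting, fix $i\in\{1,\dots,N\}$ with $\bar p_{ii}=1$ and $r(G_i)<1$, and let $x_i^*\in[1,\infty)^M$ be the unique fixed point of $F_i$. If $c\in\mathcal C$ satisfies $c(w,z_{ij})/w\ge x_i^*(\tilde z_j)^{-1/\gamma_i}$ for all $w>0$ and all $j\in\{1,\dots,M\}$, then $Tc(w,z_{ij})/w\ge x_i^*(\tilde z_j)^{-1/\gamma_i}$ for all $w>0$ and all $j\in\{1,\dots,M\}$.
   Context: Risk-aversion-shock setting. $\mathsf Z=\bar{\mathsf Z}\times\tilde{\mathsf Z}$ with $\bar{\mathsf Z}=\{\bar z_1,\dots,\bar z_N\}$, $\tilde{\mathsf Z}=\{\tilde z_1,\dots,\tilde z_M\}$; $Z_t=(\bar Z_t,\tilde Z_t)$ where $\{\bar Z_t\}$, $\{\tilde Z_t\}$ are independent Markov chains with transition matrices $\bar P=(\bar p_{ij})$ and $\tilde P=(\tilde p_{jk})$, so $\{Z_t\}$ has transition matrix $P=\bar P\otimes\tilde P$. Write $z_{ij}=(\bar z_i,\tilde z_j)$. $\{\epsilon_t\}_{t\ge1}$ i.i.d. with distribution $\pi$, independent of $\{Z_t\}$; for nonnegative measurable $\beta,R,Y$, $\beta_t=\beta(Z_{t-1},Z_t,\epsilon_t)$, $R_t=R(Z_{t-1},Z_t,\epsilon_t)$, $Y_t=Y(Z_{t-1},Z_t,\epsilon_t)$. Utility: $u(c,z_{ij})=c^{1-\gamma_i}/(1-\gamma_i)$ if $\gamma_i\ne1$ and $\log c$ if $\gamma_i=1$,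 where $0<\gamma_1<\dots<\gamma_N$; $u'(c,z)$ is the derivative in $c$. $\mathbb E_z$: expectation given $Z_0=z$; under $\mathbb E_z$, $\hat Z=Z_1$, $\hat\beta=\beta(z,\hat Z,\epsilon_1)$, $\hat R=R(z,\hat Z,\epsilon_1)$, $\hat Y=Y(z,\hat Z,\epsilon_1)$. Assumption 2 holds: (a) $\mathbb E_zu'(\hat Y,\hat Z)<\infty$ and $\mathbb E_z\hat\beta\hat Ru'(\hat Y,\hat Z)<\infty$ for all $z$; (b) $r(K(1))<1$ ($r$ = spectral radius), $K_{z\hat z}(\theta)=P(z,\hat z)\int\beta(z,\hat z,\epsilon)R(z,\hat z,\epsilon)^\theta\pi(d\epsilon)$. $S_0=(0,\infty)\times\mathsf Z$; $\mathcal C$: continuous $c:S_0\to\mathbb R_+$, increasing in $w$, $0<c(w,z)\le w$, $\sup_{S_0}|u'(c(w,z),z)-u'(w,z)|<\infty$. $T$: $Tc(w,z)$ is the unique $\xi\in(0,w]$ with $u'(\xi,z)=\max\{\mathbb E_z\hat\beta\hat Ru'(c(\hat R(w-\xi)+\hat Y,\hat Z),\hat Z),u'(w,z)\}$. For each $i$, $Q_i(j,k)=\int\beta(z_{ij},z_{ik},\epsilon)R(z_{ij},z_{ik},\epsilon)^{1-\gamma_i}\pi(d\epsilon)$, $G_i:=\bar p_{ii}(\tilde P\circ Q_i)$ ($\circ$ = entrywise product), and $F_i:[1,\infty)^M\to[1,\infty)^M$, $(F_ix)(\tilde z_j)=\big(1+(G_ix)(\tilde z_j)^{1/\gamma_i}\big)^{\gamma_i}$.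 *)

(* Defs.v *)
From HB Require Import structures.
From mathcomp Require Import all_boot all_order all_algebra.
From mathcomp Require Import all_classical all_reals all_analysis.
From mathcomp Require Import complex.

Set Implicit Arguments.
Unset Strict Implicit.
Unset Printing Implicit Defensive.

Import Order.TTheory GRing.Theory Num.Theory.
Import numFieldNormedType.Exports.

Local Open Scope classical_set_scope.
Local Open Scope ring_scope.

(** Spectral radius of a real square matrix indexed by a finite type [T]:
    the largest modulus of its complex eigenvalues (0 if [T] is empty). *)
Definition specrad (R : realType) (T : finType) (A : T -> T -> R) : R :=
  let AC : 'M[R[i]]_#|T| :=
    \matrix_(a, b) ((A (enum_val a) (enum_val b))%:C)%C in
  sup [set complex.Re `|lam| | lam in [set lam : R[i] | eigenvalue AC lam]].

Definition stochastic (R : realType) (n : nat) (A : 'M[R]_n) : Prop :=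
  (forall a b, 0 <= A a b) /\ (forall a, \sum_b A a b = 1).

Section RiskAversionShock.
Variables (R : realType) (d : measure_display) (E : measurableType d).
Variable (pi : probability E R).
Variables (N M : nat).
Local Notation Z := ('I_N * 'I_M)%type.

(** Transition matrix P = Pbar (x) Ptil of Z_t = (Zbar_t, Ztil_t). *)
Definition Ptrans (Pbar : 'M[R]_N) (Ptil : 'M[R]_M) (z zh : Z) : R :=
  Pbar z.1 zh.1 * Ptil z.2 zh.2.

(** Marginal utility u'(c, z_{ij}) = c^{-gamma_i}, valued in extended
    reals so that u'(c) = +oo for c <= 0 (in particular at c = 0). *)
Definition uprime (gamma : 'I_N -> R) (c : R) (z : Z) : \bar R :=
  if 0 < c then (c `^ (- gamma z.1))%:E else +oo%E.

Definition epow (r theta : R) : \bar R :=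
  if 0 < r then (r `^ theta)%:E
  else if 0 < theta then 0%E else if theta == 0 then 1%E else +oo%E.

(** One-step conditional expectation E_z f(Zhat, eps_1), with Zhat ~ P(z, .)
    independent of eps_1 ~ pi. *)
Definition Ez (P : Z -> Z -> R) (f : Z -> E -> \bar R) (z : Z) : \bar R :=
  (\sum_(zh : Z) (P z zh)%:E * \int[pi]_e f zh e)%E.

Definition Kentry (P : Z -> Z -> R) (beta Rr : Z -> Z -> E -> R)
    (theta : R) (z zh : Z) : \bar R :=
  ((P z zh)%:E * \int[pi]_e ((beta z zh e)%:E * epow (Rr z zh e) theta))%E.

Definition Qentry (beta Rr : Z -> Z -> E -> R) (gamma : 'I_N -> R)
    (i : 'I_N) (j k : 'I_M) : \bar R :=
  (\int[pi]_e ((beta (i, j) (i, k) e)%:E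
                 * epow (Rr (i, j) (i, k) e) (1 - gamma i)))%E.

Definition Gentry (Pbar : 'M[R]_N) (Ptil : 'M[R]_M)
    (beta Rr : Z -> Z -> E -> R) (gamma : 'I_N -> R)
    (i : 'I_N) (j k : 'I_M) : \bar R :=
  ((Pbar i i * Ptil j k)%:E * Qentry beta Rr gamma i j k)%E.

Definition Fmap (G : 'I_M -> 'I_M -> R) (gamma_i : R) (x : 'I_M -> R)
    (j : 'I_M) : R :=
  (1 + (\sum_k G j k * x k) `^ (gamma_i^-1)) `^ gamma_i.

(** The class C of candidate consumption functions on S_0 = (0,oo) x Z
    (Z carries the discrete topology). *)
Definition in_C (gamma : 'I_N -> R) (c : R -> Z -> R) : Prop :=
  [/\ (forall z, {within `]0, +oo[, continuous (fun w => c w z)}),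
      (forall z, {in `]0, +oo[ &, {homo (fun w => c w z) : a b / a <= b}}),
      (forall w z, 0 < w -> 0 < c w z <= w) &
      (exists K : R, forall w z, 0 < w ->
         `|c w z `^ (- gamma z.1) - w `^ (- gamma z.1)| <= K)].

(** xi = Tc(w,z): xi in (0,w] and
    u'(xi,z) = max{ E_z beta R u'(c(R(w - xi) + Y, Zhat), Zhat), u'(w,z) }. *)
Definition Tcond (P : Z -> Z -> R) (beta Rr Y : Z -> Z -> E -> R)
    (gamma : 'I_N -> R) (c : R -> Z -> R) (w : R) (z : Z) (xi : R) : Prop :=
  0 < xi <= w /\
  uprime gamma xi z =
    maxe (Ez P (fun zh e =>
                 let a : R := (beta z zh e * Rr z zh e)%R in
                 let w' : R := (Rr z zh e * (w - xi) + Y z zh e)%R in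
                 (a%:E * uprime gamma (c w' zh) zh)%E) z)
         (uprime gamma w z).

End RiskAversionShock.

(* Main.v *)
Require Import Defs.
From HB Require Import structures.
From mathcomp Require Import all_boot all_order all_algebra.
From mathcomp Require Import all_classical all_reals all_analysis.
From mathcomp Require Import complex.
Import Order.TTheory GRing.Theory Num.Theory.
Import numFieldNormedType.Exports.
Local Open Scope classical_set_scope.
Local Open Scope ring_scope.

Import HBNNSimple.
From mathcomp Require Import ring lra.


Lemma int_le_scale d (T : measurableType d) (R : realType)
  (mu : {measure set T -> \bar R}) (f g : T -> \bar R) (C : R) :
  0 <= C -> (forall x, 0 <= f x)%E -> (forall x, 0 <= g x)%E ->
  (forall x, f x <= C%:E * g x)%E ->
  (\int[mu]_x f x <= C%:E * \int[mu]_x g x)%E.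
Proof.
move=> C0 f0 g0 fg.
rewrite (ge0_integralTE _ f0) (ge0_integralTE _ g0).
apply: ge_ereal_sup => _ [h /= hf <-].
have [C00|Cgt0] := eqVneq C 0.
  rewrite C00 mul0e.
  rewrite (eq_sintegral (cst 0%R)) ?sintegral0// => x /=.
  apply/eqP; rewrite eq_le; apply/andP; split; last by [].
  by rewrite -lee_fin (le_trans (hf x))// (le_trans (fg x))// C00 mul0e.
have Cp : 0 < C by rewrite lt_neqAle eq_sym Cgt0.
have Ci0 : 0 <= C^-1 by rewrite invr_ge0.
pose h' := scale_nnsfun h Ci0.
have -> : sintegral mu h = (C%:E * sintegral mu h')%E.
  rewrite /h' (_ : (scale_nnsfun h Ci0 : T -> R) = (cst C^-1 \* h)%R) //.
  rewrite sintegralrM muleA -EFinM mulfV ?mul1e//.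
apply: lee_wpmul2l; first by rewrite lee_fin.
apply: ereal_sup_ubound; exists h' => //= x.
have := le_trans (hf x) (fg x).
case: (g x) => [r| |] //=; [idtac|by move=> _; rewrite leey|by rewrite gt0_muleNy ?lte_fin// leeNy_eq].
rewrite -EFinM !lee_fin => hr.
by rewrite ler_pdivrMl.
Qed.

Lemma int_le d (T : measurableType d) (R : realType)
  (mu : {measure set T -> \bar R}) (f g : T -> \bar R) :
  (forall x, 0 <= f x)%E -> (forall x, f x <= g x)%E ->
  (\int[mu]_x f x <= \int[mu]_x g x)%E.
Proof.
move=> f0 fg.
have g0 : forall x, (0 <= g x)%E by move=> x; exact: le_trans (f0 x) (fg x).
rewrite (ge0_integralTE _ f0) (ge0_integralTE _ g0).
apply: ereal_sup_le => _ [h /= hf <-]; exists h => //= x.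
exact: le_trans (hf x) (fg x).
Qed.



Lemma powN_le {R : realType} (g a b : R) : 0 < g -> 0 < a -> a <= b ->
  b `^ (- g) <= a `^ (- g).
Proof.
move=> g0 a0 ab.
have b0 : 0 < b by exact: lt_le_trans ab.
rewrite !powRN lef_pV2 ?posrE ?powR_gt0//.
exact: (ge0_ler_powR (ltW g0)) (ltW a0) (ltW b0) ab.
Qed.

Lemma L_pt {R : realType} (g a c R0 d0 : R) : 0 < g -> 0 < a -> 0 < R0 -> 0 < d0 ->
  a * (R0 * d0) <= c -> c `^ (- g) <= a `^ (- g) * R0 `^ (- g) * d0 `^ (- g).
Proof.
move=> g0 a0 R00 d00 h.
rewrite -powRM ?(ltW a0) ?(ltW R00)// -powRM ?mulr_ge0 ?(ltW a0) ?(ltW R00) ?(ltW d00)// -mulrA.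
by apply: powN_le => //; rewrite !mulr_gt0.
Qed.

Lemma L_final {R : realType} (g xi w S xj : R) : 0 < g -> 0 < xi -> xi < w -> 0 < S ->
  xj = (1 + S `^ g^-1) `^ g -> xi `^ (- g) <= (w - xi) `^ (- g) * S ->
  xj `^ (- g^-1) <= xi / w.
Proof.
move=> g0 xi0 xiw S0 -> H.
set s := S `^ g^-1.
have s0 : 0 < s by rewrite powR_gt0.
have Ss : S = s `^ g by rewrite /s -powRrM mulVf ?gt_eqF// powRr1// ltW.
have wx0 : 0 < w - xi by rewrite subr_gt0.
have key : w - xi <= xi * s.
  rewrite leNgt; apply/negP => lt.
  have := gt0_ltr_powR g0 _ _ lt.
  rewrite !nnegrE mulr_ge0 ?ltW// => /(_ isT isT).
  rewrite powRM ?ltW// -Ss => lt2.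
  have A0 : 0 < xi `^ g by exact: powR_gt0.
  have B0 : 0 < (w - xi) `^ g by exact: powR_gt0.
  move: H; rewrite !powRN => H.
  have := ler_wpM2r (ltW (mulr_gt0 A0 B0)) H.
  have -> : (xi `^ g)^-1 * (xi `^ g * (w - xi) `^ g) = (w - xi) `^ g.
    by rewrite mulrA mulVf ?mul1r ?gt_eqF.
  have -> : ((w - xi) `^ g)^-1 * S * (xi `^ g * (w - xi) `^ g) = xi `^ g * S.
    by field; rewrite gt_eqF.
  by rewrite leNgt lt2.
rewrite -powRrM mulrN mulrV ?unitfE ?gt_eqF// (powR_inv1 (addr_ge0 ler01 (ltW s0))).
have w0 : 0 < w by exact: lt_trans xiw.
rewrite ler_pdivlMr // ler_pdivrMl ?addr_gt0//.
nra.
Qed.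

Lemma uprime_ge0 (R : realType) (N M : nat) (gamma : 'I_N -> R) (t : R) (z : 'I_N * 'I_M) :
  (0 <= uprime gamma t z)%E.
Proof. by rewrite /uprime; case: ifP => _; rewrite ?lee_fin ?powR_ge0 ?leey. Qed.

Lemma epow_ge0 (R : realType) (r t : R) : (0 <= epow r t)%E.
Proof.
rewrite /epow; case: ifP => _; first by rewrite lee_fin powR_ge0.
by case: ifP => _ //; case: ifP => _ //; rewrite leey.
Qed.

Lemma sum_pair (R : realType) (N M : nat) (F : 'I_N * 'I_M -> \bar R) :
  (\sum_(zh : 'I_N * 'I_M) F zh = \sum_(a : 'I_N) \sum_(b : 'I_M) F (a, b))%E.
Proof. by rewrite pair_bigA; apply: eq_bigr => -[a b]. Qed.

Theorem lemmaD1
  (R : realType) (d : measure_display) (E : measurableType d)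
  (pi : probability E R) (N M : nat)
  (Pbar : 'M[R]_N) (Ptil : 'M[R]_M)
  (beta Rr Y : 'I_N * 'I_M -> 'I_N * 'I_M -> E -> R)
  (gamma : 'I_N -> R)
  (* the setting *)
  (hPbar : stochastic Pbar) (hPtil : stochastic Ptil)
  (hbeta0 : forall z zh e, 0 <= beta z zh e)
  (hR0 : forall z zh e, 0 <= Rr z zh e)
  (hY0 : forall z zh e, 0 <= Y z zh e)
  (hbetam : forall z zh, measurable_fun setT (beta z zh))
  (hRm : forall z zh, measurable_fun setT (Rr z zh))
  (hYm : forall z zh, measurable_fun setT (Y z zh))
  (hgamma0 : forall a, 0 < gamma a)
  (hgamma_mono : forall a b : 'I_N, (a < b)%N -> gamma a < gamma b)
  (* Assumption 2 (a) *)
  (A2a1 : forall z, (Ez pi (Ptrans Pbar Ptil)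
            (fun zh e => uprime gamma (Y z zh e) zh) z < +oo)%E)
  (A2a2 : forall z, (Ez pi (Ptrans Pbar Ptil)
            (fun zh e => (beta z zh e * Rr z zh e)%R%:E
                         * uprime gamma (Y z zh e) zh) z < +oo)%E)
  (* Assumption 2 (b): r(K(1)) < 1 (entries of K(1) finite) *)
  (A2b_fin : forall z zh,
      Kentry pi (Ptrans Pbar Ptil) beta Rr 1 z zh \is a fin_num)
  (A2b : specrad (fun z zh => fine (Kentry pi (Ptrans Pbar Ptil) beta Rr 1 z zh))
         < 1)
  (* the fixed index i *)
  (i : 'I_N) (hpii : Pbar i i = 1)
  (hG_fin : forall j k, Gentry pi Pbar Ptil beta Rr gamma i j k \is a fin_num)
  (hG : specrad (fun j k => fine (Gentry pi Pbar Ptil beta Rr gamma i j k)) < 1)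
  (* x_i^* : the fixed point of F_i in [1,oo)^M *)
  (x : 'I_M -> R) (hx1 : forall j, 1 <= x j)
  (hxfix : forall j,
      Fmap (fun j k => fine (Gentry pi Pbar Ptil beta Rr gamma i j k))
           (gamma i) x j = x j)
  (* the candidate consumption function *)
  (c : R -> 'I_N * 'I_M -> R) (hc : in_C gamma c)
  (hcx : forall w j, 0 < w -> x j `^ (- (gamma i)^-1) <= c w (i, j) / w) :
  forall (w : R) (j : 'I_M) (xi : R), 0 < w ->
    Tcond pi (Ptrans Pbar Ptil) beta Rr Y gamma c w (i, j) xi ->
    x j `^ (- (gamma i)^-1) <= xi / w.


Proof.
move=> w j xi w0 [/andP [xi0 xiw] Heq].
have g0 : 0 < gamma i := hgamma0 i.
have hP0 : forall b, b != i -> Pbar i b = 0.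
  case: hPbar => h0 h1.
  have hs : \sum_(b | b != i) Pbar i b = 0.
    by move: (h1 i); rewrite (bigD1 i) //= hpii => h; lra.
  move=> b bi; apply: (psumr_eq0P _ hs) => // a _; exact: h0.
have [exi|xine] := eqVneq xi w.
  rewrite exi divff ?gt_eqF//.
  have := ler_powR (hx1 j) (_ : - (gamma i)^-1 <= 0).
  rewrite powRr0; apply; by rewrite oppr_le0 invr_ge0 ltW.
have xiw' : xi < w by rewrite lt_neqAle xine xiw.
have wx0 : 0 < w - xi by rewrite subr_gt0.
set C := (w - xi) `^ (- gamma i).
set S := \sum_k fine (Gentry pi Pbar Ptil beta Rr gamma i j k) * x k.
set EZ := Ez _ _ _ _ in Heq.
rewrite /uprime /= xi0 w0 in Heq.
have lt : w `^ (- gamma i) < xi `^ (- gamma i).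
  rewrite !powRN ltf_pV2 ?posrE ?powR_gt0//.
  by apply: (gt0_ltr_powR g0); rewrite ?nnegrE ?(ltW xi0) ?(ltW w0).
have HEZ : EZ = (xi `^ (- gamma i))%:E.
  move: Heq; case: (leP EZ (w `^ (- gamma i))%:E) => h.
    move=> e; have e' := EFin_inj e; by rewrite e' ltxx in lt.
  by [].
have Tb : forall k,
  ((Pbar i i * Ptil j k)%R%:E * \int[pi]_e
     ((beta (i, j) (i, k) e * Rr (i, j) (i, k) e)%R%:E *
      uprime gamma (c (Rr (i, j) (i, k) e * (w - xi) + Y (i, j) (i, k) e)%R (i, k)) (i, k))
   <= (C * x k)%R%:E * Gentry pi Pbar Ptil beta Rr gamma i j k)%E.
  move=> k; rewrite /Gentry hpii mul1r muleCA.
  apply: lee_wpmul2l; first by rewrite lee_fin; case: hPtil.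
  apply: int_le_scale.
  - by rewrite mulr_ge0 ?powR_ge0 // (le_trans ler01 (hx1 k)).
  - move=> e; apply: mule_ge0; last exact: uprime_ge0.
    by rewrite lee_fin mulr_ge0.
  - move=> e; apply: mule_ge0; last exact: epow_ge0.
    by rewrite lee_fin.
  move=> e.
  have b0 := hbeta0 (i, j) (i, k) e.
  have := hR0 (i, j) (i, k) e; rewrite le_eqVlt => /predU1P [R0|Rp].
    rewrite -R0 mulr0 mul0e; apply: mule_ge0.
      by rewrite lee_fin mulr_ge0 ?powR_ge0 // (le_trans ler01 (hx1 k)).
    by apply: mule_ge0; [rewrite lee_fin|exact: epow_ge0].
  set Rv := Rr (i, j) (i, k) e in Rp *.
  set w' := Rv * (w - xi) + Y (i, j) (i, k) e.
  have Y0 := hY0 (i, j) (i, k) e.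
  have w'0 : 0 < w'.
    by rewrite /w' (lt_le_trans (mulr_gt0 Rp wx0)) // lerDl.
  case: hc => _ _ hc3 _.
  have /andP [c0 _] := hc3 w' (i, k) w'0.
  rewrite /uprime /= c0 /epow Rp -!EFinM lee_fin.
  set al := x k `^ (- (gamma i)^-1).
  have al0 : 0 < al by rewrite powR_gt0 // (lt_le_trans ltr01 (hx1 k)).
  have hm : al * (Rv * (w - xi)) <= c w' (i, k).
    have := hcx w' k w'0; rewrite -/al ler_pdivlMr // => h.
    apply: le_trans h; apply: ler_wpM2l; first exact: ltW.
    by rewrite /w' lerDl.
  have key := @L_pt _ _ _ _ _ _ g0 al0 Rp wx0 hm.
  have alx : al `^ (- gamma i) = x k.
    rewrite /al -powRrM mulrNN mulVf ?gt_eqF // powRr1 //.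
    exact: le_trans ler01 (hx1 k).
  rewrite alx in key.
  have -> : Rv `^ (1 - gamma i) = Rv * Rv `^ (- gamma i).
    rewrite powRD; last by rewrite (gt_eqF Rp) implybT.
    by rewrite powRr1 // ltW.
  apply: (le_trans (ler_wpM2l (mulr_ge0 b0 (ltW Rp)) key)).
  rewrite le_eqVlt; apply/orP; left; apply/eqP; rewrite /C; ring.
have Hb : (EZ <= (C * S)%:E)%E.
  rewrite /EZ /Ez sum_pair (bigD1 i) //=.
  rewrite [X in (_ + X)%E]big1 ?adde0; last first.
    move=> a ai; apply: big1 => b _.
    by rewrite /Ptrans /= hP0 // mul0r mul0e.
  rewrite /Ptrans /=.
  apply: (@le_trans _ _ (\sum_k ((C * x k)%R%:E * Gentry pi Pbar Ptil beta Rr gamma i j k))%E).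
    by apply: lee_sum => k _; exact: Tb k.
  rewrite /S mulr_sumr -sumEFin; apply: lee_sum => k _.
  rewrite -(fineK (hG_fin j k)) -EFinM lee_fin /= le_eqVlt; apply/orP; left; apply/eqP; ring.
rewrite HEZ lee_fin in Hb.
have S0 : 0 < S.
  have := lt_le_trans (powR_gt0 (- gamma i) xi0) Hb.
  by rewrite pmulr_rgt0 // powR_gt0.
apply: (@L_final _ _ _ _ _ _ g0 xi0 xiw' S0 _ Hb).
by rewrite -(hxfix j) /Fmap.
Qed.
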